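(* Every quasiorder on a set $A$ is the intersection of a family of half-space quasiorders on $A$.
   Context: A quasiorder on $A$ is a reflexive and transitive relation; $\Delta_A=\{(a,a)\mid a\in A\}$. A quasiorder $\alpha$ on $A$ is a half-space if there is a quasiorder $\beta$ on $A$ with $\alpha\cup\beta=A\times A$ and $\alpha\cap\beta=\Delta_A$. *)

(* Defs.v *)
Definition quasiorder {A : Type} (r : A -> A -> Prop) : Prop :=
  (forall a, r a a) /\ (forall a b c, r a b -> r b c -> r a c).

Definition half_space {A : Type} (alpha : A -> A -> Prop) : Prop :=
  quasiorder alpha /\
  exists beta : A -> A -> Prop,
    quasiorder beta /\
    (forall a b, alpha a b \/ beta a b) /\
    (forall a b, (alpha a b /\ beta a b) <-> a = b).

(* Main.v *)
Require Import Defs.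
From Stdlib Require Import Classical.

Theorem theorem2p9 (A : Type) (rho : A -> A -> Prop) :
  quasiorder rho ->
  exists F : (A -> A -> Prop) -> Prop,
    (forall alpha, F alpha -> half_space alpha) /\
    (forall a b, rho a b <-> (forall alpha, F alpha -> alpha a b)).
Proof.
  intros [Hr Ht].
  exists (fun alpha => exists a, forall x y, alpha x y <-> (~ rho a x \/ rho a y)).
  split.
  - intros alpha [a Ha]. split; [split|].
    + intros x. apply Ha. destruct (classic (rho a x)); tauto.
    + intros x y z Hxy Hyz. apply Ha. apply Ha in Hxy. apply Ha in Hyz. tauto.
    + exists (fun x y => x = y \/ (rho a x /\ ~ rho a y)).
      split; [split|split].
      * intros; left; reflexivity.
      * intros x y z [->|[H1 H2]] [<-|[H3 H4]]; try tauto.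
      * intros x y. rewrite Ha. destruct (classic (rho a x)), (classic (rho a y)); tauto.
      * intros x y. rewrite Ha. split.
        -- intros [H1 [H2|[H3 H4]]]; [exact H2|tauto].
        -- intros ->. split; [|left; reflexivity].
           destruct (classic (rho a y)); tauto.
  - intros a b. split.
    + intros Hab alpha [c Hc]. apply Hc.
      destruct (classic (rho c a)) as [H|H]; [right; eauto|left; exact H].
    + intros H. assert (Hf := H (fun x y => ~ rho a x \/ rho a y)).
      destruct Hf as [Hf|Hf]; [exists a; tauto| exfalso; apply Hf, Hr | exact Hf].
Qed.
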